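(* Suppose the shortest $s_0$-$s_1$ path $P_0$ in $G$ is unique. Then along every trajectory of the Physarum dynamics, for every vertex $v$ on $P_0$, $p_v(t)\to \operatorname{dist}(v,s_1)$ as $t\to\infty$, where $\operatorname{dist}(v,s_1)$ is the shortest-path distance (w.r.t. the lengths $L$) from $v$ to $s_1$ in $G$.
   Context: Let $G=(N,E)$ be a finite connected undirected graph with two distinct vertices $s_0$ (source) and $s_1$ (sink). Each edge $e$ has a fixed length $L_e>0$. Each edge has a time-dependent diameter $D_e(t)$ with $D_e(0)>0$, and resistance $R_e=L_e/D_e$. At each time $t$, the vertex potentials $p_v$ (normalized by $p_{s_1}=0$) are the solution of $\sum_{u\in\delta(v)}(p_v-p_u)/R_{uv}=b_v$ for all $v$, where $\delta(v)$ is the set of neighbours of $v$, $b_{s_0}=1$, $b_{s_1}=-1$, $b_v=0$ otherwise; for an edge $e=\{u,v\}$ with an arbitrarily fixed orientation $(u,v)$ the current is $Q_e=(p_u-p_v)/R_e=D_e(p_u-p_v)/L_e$. The diameters evolve by $\dot D_e(t)=|Q_e(t)|-D_e(t)$ for all $e\in E$ (the ''Physarum dynamics''). *)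

(* Defs.v *)
From Stdlib Require Import Reals List Arith.
Import ListNotations.
Open Scope R_scope.

(* A finite undirected graph: vertices 0..n-1, edges 0..m-1; edge e joins
   eu e and ev e (the fixed orientation of e is (eu e, ev e)). *)

Definition other (eu ev : nat -> nat) (e x : nat) : nat :=
  if Nat.eqb (eu e) x then ev e else eu e.

Fixpoint is_walk (m : nat) (eu ev : nat -> nat) (x : nat) (es : list nat) (y : nat) : Prop :=
  match es with
  | [] => x = y
  | e :: es' => (e < m)%nat /\ (eu e = x \/ ev e = x) /\
                is_walk m eu ev (other eu ev e x) es' y
  end.

Fixpoint walk_verts (eu ev : nat -> nat) (x : nat) (es : list nat) : list nat :=
  match es with
  | [] => [x]
  | e :: es' => x :: walk_verts eu ev (other eu ev e x) es'
  end.

Definition is_path (m : nat) (eu ev : nat -> nat) (x : nat) (es : list nat) (y : nat) : Prop :=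
  is_walk m eu ev x es y /\ NoDup (walk_verts eu ev x es).

Definition walk_len (L : nat -> R) (es : list nat) : R :=
  fold_right (fun e acc => L e + acc) 0 es.

Definition simple_graph (n m : nat) (eu ev : nat -> nat) : Prop :=
  (forall e, (e < m)%nat -> (eu e < n)%nat /\ (ev e < n)%nat /\ eu e <> ev e) /\
  (forall e f, (e < m)%nat -> (f < m)%nat -> e <> f ->
     ~ ((eu e = eu f /\ ev e = ev f) \/ (eu e = ev f /\ ev e = eu f))).

Definition connected (n m : nat) (eu ev : nat -> nat) : Prop :=
  forall u v, (u < n)%nat -> (v < n)%nat -> exists es, is_walk m eu ev u es v.

Definition is_dist (m : nat) (eu ev : nat -> nat) (L : nat -> R) (x y : nat) (d : R) : Prop :=
  (exists es, is_walk m eu ev x es y /\ walk_len L es = d) /\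
  (forall es, is_walk m eu ev x es y -> d <= walk_len L es).

Definition unique_shortest_path (m : nat) (eu ev : nat -> nat) (L : nat -> R)
    (s0 s1 : nat) (P0 : list nat) : Prop :=
  is_path m eu ev s0 P0 s1 /\
  (forall es, is_path m eu ev s0 es s1 -> es <> P0 -> walk_len L P0 < walk_len L es).

Definition current (eu ev : nat -> nat) (L : nat -> R) (D : R -> nat -> R)
    (p : R -> nat -> R) (t : R) (e : nat) : R :=
  D t e / L e * (p t (eu e) - p t (ev e)).

Definition net_out (m : nat) (eu ev : nat -> nat) (L : nat -> R) (D : R -> nat -> R)
    (p : R -> nat -> R) (t : R) (v : nat) : R :=
  fold_right (fun e acc =>
      (if Nat.eqb (eu e) v then current eu ev L D p t e
       else if Nat.eqb (ev e) v then - current eu ev L D p t e else 0) + acc)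
    0 (seq 0 m).

Definition supply (s0 s1 v : nat) : R :=
  if Nat.eqb v s0 then 1 else if Nat.eqb v s1 then -1 else 0.

Definition potentials_ok (n m : nat) (eu ev : nat -> nat) (L : nat -> R)
    (D : R -> nat -> R) (p : R -> nat -> R) (s0 s1 : nat) : Prop :=
  forall t, 0 <= t ->
    p t s1 = 0 /\
    forall v, (v < n)%nat -> net_out m eu ev L D p t v = supply s0 s1 v.

Definition physarum_traj (m : nat) (eu ev : nat -> nat) (L : nat -> R)
    (D : R -> nat -> R) (p : R -> nat -> R) : Prop :=
  forall e, (e < m)%nat ->
    0 < D 0 e /\
    (forall eps, 0 < eps -> exists delta, 0 < delta /\
        forall t, 0 <= t < delta -> Rabs (D t e - D 0 e) < eps) /\
    (forall t, 0 < t ->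
        derivable_pt_lim (fun s => D s e) t
          (Rabs (current eu ev L D p t e) - D t e)).

(* Main.v *)
Require Import Defs.
From Stdlib Require Import Reals List Arith Lra Lia Psatz ClassicalEpsilon.
Import ListNotations.
Open Scope R_scope.

Definition sumL (l : list nat) (f : nat -> R) : R :=
  fold_right (fun e acc => f e + acc) 0 l.
Arguments sumL : simpl never.

Lemma sumL_nil f : sumL [] f = 0. Proof. reflexivity. Qed.
Lemma sumL_cons a l f : sumL (a :: l) f = f a + sumL l f. Proof. reflexivity. Qed.

Lemma sumL_app l1 l2 f : sumL (l1 ++ l2) f = sumL l1 f + sumL l2 f.
Proof. induction l1; cbn [app]; rewrite ?sumL_nil, ?sumL_cons; [ring|]. rewrite IHl1; ring. Qed.

Lemma sumL_plus l f g : sumL l (fun e => f e + g e) = sumL l f + sumL l g.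
Proof. induction l; rewrite ?sumL_nil, ?sumL_cons; [ring|]. rewrite IHl; ring. Qed.

Lemma sumL_scal l c f : sumL l (fun e => c * f e) = c * sumL l f.
Proof. induction l; rewrite ?sumL_nil, ?sumL_cons; [ring|]. rewrite IHl; ring. Qed.

Lemma sumL_ext l f g : (forall e, In e l -> f e = g e) -> sumL l f = sumL l g.
Proof. induction l; intros H; auto. rewrite !sumL_cons. rewrite H by (left; auto).
  rewrite IHl; auto. intros; apply H; right; auto. Qed.

Lemma sumL_le l f g : (forall e, In e l -> f e <= g e) -> sumL l f <= sumL l g.
Proof. induction l; intros H; rewrite ?sumL_nil; [lra|]. rewrite !sumL_cons.
  assert (f a <= g a) by (apply H; left; auto).
  assert (sumL l f <= sumL l g) by (apply IHl; intros; apply H; right; auto). lra. Qed.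

Lemma sumL_nonneg l f : (forall e, In e l -> 0 <= f e) -> 0 <= sumL l f.
Proof. intros H. replace 0 with (sumL l (fun _ => 0)). apply sumL_le; auto.
  clear H. induction l; auto. rewrite sumL_cons, IHl. ring. Qed.

Lemma sumL_ge_term l f a : In a l -> (forall e, In e l -> 0 <= f e) -> f a <= sumL l f.
Proof. induction l; intros Ha H; simpl in Ha; [tauto|]. rewrite sumL_cons.
  destruct Ha as [<-|Ha].
  - assert (0 <= sumL l f) by (apply sumL_nonneg; intros; apply H; right; auto). lra.
  - assert (f a <= sumL l f) by (apply IHl; auto; intros; apply H; right; auto).
    assert (0 <= f a0) by (apply H; left; auto). lra. Qed.

Lemma sumL_abs l f : Rabs (sumL l f) <= sumL l (fun e => Rabs (f e)).
Proof. induction l. rewrite !sumL_nil, Rabs_R0; lra. rewrite !sumL_cons.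
  eapply Rle_trans. apply Rabs_triang. lra. Qed.

Lemma sumL_swap l1 l2 (g : nat -> nat -> R) :
  sumL l1 (fun v => sumL l2 (fun e => g v e)) = sumL l2 (fun e => sumL l1 (fun v => g v e)).
Proof. induction l1.
  - rewrite sumL_nil. induction l2; auto. rewrite sumL_cons, <- IHl2, sumL_nil. ring.
  - rewrite sumL_cons, IHl1. rewrite <- sumL_plus. apply sumL_ext. intros; reflexivity. Qed.

Lemma sumL_zero l : sumL l (fun _ => 0) = 0.
Proof. induction l. apply sumL_nil. rewrite sumL_cons, IHl; lra. Qed.

Lemma sumL_delta l a c : NoDup l -> In a l ->
  sumL l (fun v => if Nat.eqb a v then c else 0) = c.
Proof. induction l as [|b l IH]; intros Hn Ha; simpl in Ha; [tauto|]. rewrite sumL_cons.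
  inversion Hn; subst. destruct Ha as [Ha|Ha].
  - subst b. rewrite Nat.eqb_refl. replace (sumL l _) with (sumL l (fun _ => 0)).
    + rewrite sumL_zero; lra.
    + apply sumL_ext. intros e He. destruct (Nat.eqb_spec a e); subst; tauto.
  - destruct (Nat.eqb_spec a b); subst; [tauto|]. rewrite IH; auto; lra. Qed.

Lemma sumL_delta_seq n a c : (a < n)%nat ->
  sumL (seq 0 n) (fun v => if Nat.eqb a v then c else 0) = c.
Proof. intros; apply sumL_delta. apply seq_NoDup. apply in_seq; lia. Qed.

Lemma sumL_delta_mul n a (f : nat -> R) c : (a < n)%nat ->
  sumL (seq 0 n) (fun v => f v * (if Nat.eqb a v then c else 0)) = f a * c.
Proof. intros H. rewrite <- (sumL_delta_seq n a (f a * c) H). apply sumL_ext.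
  intros v _. destruct (Nat.eqb_spec a v); subst; ring. Qed.

Definition netF (m : nat) (eu ev : nat -> nat) (F : nat -> R) (v : nat) : R :=
  sumL (seq 0 m) (fun e => (if Nat.eqb (eu e) v then F e
       else if Nat.eqb (ev e) v then - F e else 0)).

Lemma sum_by_parts n m eu ev s0 s1 (F : nat -> R) (f : nat -> R) :
  simple_graph n m eu ev -> (s0 < n)%nat -> (s1 < n)%nat -> s0 <> s1 ->
  (forall v, (v < n)%nat -> netF m eu ev F v = supply s0 s1 v) ->
  sumL (seq 0 m) (fun e => F e * (f (eu e) - f (ev e))) = f s0 - f s1.
Proof.
  intros [Hs _] H0 H1 H01 HK.
  transitivity (sumL (seq 0 n) (fun v => f v * netF m eu ev F v)).
  - symmetry. transitivity (sumL (seq 0 n) (fun v => sumL (seq 0 m) (fun e => f v *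
      (if Nat.eqb (eu e) v then F e else if Nat.eqb (ev e) v then - F e else 0)))).
    { apply sumL_ext. intros; unfold netF; rewrite <- sumL_scal; reflexivity. }
    rewrite sumL_swap. apply sumL_ext. intros e He. apply in_seq in He.
    destruct (Hs e ltac:(lia)) as (Hu & Hv & Huv).
    transitivity (sumL (seq 0 n) (fun v => f v * (if Nat.eqb (eu e) v then F e else 0))
       + sumL (seq 0 n) (fun v => f v * (if Nat.eqb (ev e) v then - F e else 0))).
    + rewrite <- sumL_plus. apply sumL_ext. intros v _.
      destruct (Nat.eqb_spec (eu e) v); destruct (Nat.eqb_spec (ev e) v); subst; try ring.
      congruence.
    + rewrite sumL_delta_mul, sumL_delta_mul by auto. ring.
  - transitivity (sumL (seq 0 n) (fun v => f v * supply s0 s1 v)).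
    + apply sumL_ext. intros v Hv. apply in_seq in Hv. rewrite HK by lia. reflexivity.
    + transitivity (sumL (seq 0 n) (fun v => f v * (if Nat.eqb s0 v then 1 else 0))
       + sumL (seq 0 n) (fun v => f v * (if Nat.eqb s1 v then -1 else 0))).
      * rewrite <- sumL_plus. apply sumL_ext. intros v _. unfold supply.
        destruct (Nat.eqb_spec v s0); destruct (Nat.eqb_spec s0 v);
        destruct (Nat.eqb_spec v s1); destruct (Nat.eqb_spec s1 v); subst; try ring; congruence.
      * rewrite !sumL_delta_mul by auto. ring.
Qed.

Lemma net_out_netF m eu ev L D p t v :
  net_out m eu ev L D p t v = netF m eu ev (current eu ev L D p t) v.
Proof. reflexivity. Qed.

Lemma cut_bound n m eu ev L D p t s0 s1 e0 :
  simple_graph n m eu ev -> (s0 < n)%nat -> (s1 < n)%nat -> s0 <> s1 ->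
  (forall e, (e < m)%nat -> 0 < L e) ->
  (forall e, (e < m)%nat -> 0 <= D t e) ->
  (forall v, (v < n)%nat -> netF m eu ev (current eu ev L D p t) v = supply s0 s1 v) ->
  (e0 < m)%nat -> Rabs (current eu ev L D p t e0) <= 1.
Proof.
  intros Hs H0 H1 H01 HL HD HK He0.
  set (F := current eu ev L D p t).
  assert (key : forall c, F e0 * ((if Rle_dec c (p t (eu e0)) then 1 else 0)
                    - (if Rle_dec c (p t (ev e0)) then 1 else 0)) <= 1).
  { intro c. set (f := fun w => if Rle_dec c (p t w) then 1 else 0).
    pose proof (sum_by_parts n m eu ev s0 s1 F f Hs H0 H1 H01 HK) as HS.
    assert (Hnn : forall e, In e (seq 0 m) -> 0 <= F e * (f (eu e) - f (ev e))).
    { intros e He. apply in_seq in He. unfold F, current, f.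
      assert (0 <= D t e / L e).
      { apply Rmult_le_pos. apply HD; lia. left; apply Rinv_0_lt_compat, HL; lia. }
      destruct (Rle_dec c (p t (eu e))); destruct (Rle_dec c (p t (ev e))); try nra. }
    pose proof (sumL_ge_term (seq 0 m) (fun e => F e * (f (eu e) - f (ev e))) e0
       ltac:(apply in_seq; lia) Hnn) as Hle. cbv beta in Hle. rewrite HS in Hle.
    unfold f in *. destruct (Rle_dec c (p t s0)); destruct (Rle_dec c (p t s1)); lra. }
  assert (Hpos : 0 <= D t e0 / L e0).
  { apply Rmult_le_pos. apply HD; lia. left; apply Rinv_0_lt_compat, HL; lia. }
  unfold F, current in *.
  destruct (Rle_dec (p t (eu e0)) (p t (ev e0))).
  - specialize (key (p t (ev e0))).
    destruct (Rle_dec (p t (ev e0)) (p t (eu e0))); destruct (Rle_dec (p t (ev e0)) (p t (ev e0))); try lra.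
    + assert (p t (eu e0) = p t (ev e0)) by lra. rewrite H, Rminus_diag, Rmult_0_r, Rabs_R0. lra.
    + rewrite Rabs_left1 by nra. nra.
  - specialize (key (p t (eu e0))).
    destruct (Rle_dec (p t (eu e0)) (p t (eu e0))); destruct (Rle_dec (p t (eu e0)) (p t (ev e0))); try lra.
    rewrite Rabs_right by nra. nra.
Qed.

Lemma energy_id n m eu ev L D p t s0 s1 :
  simple_graph n m eu ev -> (s0 < n)%nat -> (s1 < n)%nat -> s0 <> s1 ->
  (forall e, (e < m)%nat -> 0 < L e) ->
  (forall e, (e < m)%nat -> 0 < D t e) ->
  (forall v, (v < n)%nat -> netF m eu ev (current eu ev L D p t) v = supply s0 s1 v) ->
  p t s1 = 0 ->
  sumL (seq 0 m) (fun e => L e / D t e * (current eu ev L D p t e)^2) = p t s0.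
Proof.
  intros Hs H0 H1 H01 HL HD HK Hp1.
  rewrite <- (Rminus_0_r (p t s0)), <- Hp1.
  rewrite <- (sum_by_parts n m eu ev s0 s1 _ (p t) Hs H0 H1 H01 HK).
  apply sumL_ext. intros e He; apply in_seq in He.
  assert (0 < L e) by (apply HL; lia). assert (0 < D t e) by (apply HD; lia).
  unfold current. field. lra.
Qed.

Lemma walk_abs_le m eu ev (g : nat -> R) a es b :
  is_walk m eu ev a es b -> Rabs (g a - g b) <= sumL es (fun e => Rabs (g (eu e) - g (ev e))).
Proof.
  revert a. induction es as [|e es IH]; intros a Hw; simpl in Hw.
  - subst. rewrite Rminus_diag, Rabs_R0, sumL_nil; lra.
  - destruct Hw as (He & Ha & Hw). rewrite sumL_cons.
    specialize (IH _ Hw).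
    assert (Rabs (g a - g (other eu ev e a)) <= Rabs (g (eu e) - g (ev e))).
    { unfold other. destruct (Nat.eqb_spec (eu e) a).
      - subst; lra.
      - destruct Ha as [Ha|Ha]; [congruence|]. subst. rewrite Rabs_minus_sym; lra. }
    eapply Rle_trans. 2: apply Rplus_le_compat; [apply H | apply IH].
    replace (g a - g b) with ((g a - g (other eu ev e a)) + (g (other eu ev e a) - g b)) by ring.
    apply Rabs_triang.
Qed.

Lemma quad_lemma P M N : 0 <= P -> 0 <= N -> (forall lam, 0 <= P - 2*lam*M + lam^2*N) -> M^2 <= P*N.
Proof.
  intros HP HN H. destruct (Req_dec N 0) as [HN0|HN0].
  - subst. destruct (Req_dec M 0) as [->|HM]. lra.
    specialize (H ((P+1)/(2*M))). exfalso.
    assert (2 * ((P + 1) / (2 * M)) * M = P + 1) by (field; auto). nra.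
  - specialize (H (M/N)).
    assert (P - 2 * (M / N) * M + (M / N) ^ 2 * N = P - M^2/N) by (field; auto).
    rewrite H0 in H. assert (0 < N) by lra.
    assert (M^2/N <= P) by lra. apply (Rmult_le_compat_r N) in H2; [|lra].
    unfold Rdiv in H2. rewrite Rmult_assoc, Rinv_l in H2 by auto. lra.
Qed.

Lemma cauchy_schwarz l (c a b : nat -> R) : (forall e, In e l -> 0 <= c e) ->
  (sumL l (fun e => c e * a e * b e))^2 <=
  sumL l (fun e => c e * (a e)^2) * sumL l (fun e => c e * (b e)^2).
Proof.
  intros Hc. apply quad_lemma.
  - apply sumL_nonneg; intros; apply Rmult_le_pos; [auto | apply pow2_ge_0].
  - apply sumL_nonneg; intros; apply Rmult_le_pos; [auto | apply pow2_ge_0].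
  - intro lam.
    replace (sumL l (fun e => c e * a e ^ 2) - 2 * lam * sumL l (fun e => c e * a e * b e) +
       lam ^ 2 * sumL l (fun e => c e * b e ^ 2))
     with (sumL l (fun e => c e * (a e - lam * b e)^2)).
    + apply sumL_nonneg; intros; apply Rmult_le_pos; [auto | apply pow2_ge_0].
    + transitivity (sumL l (fun e => (c e * a e^2 + (-2*lam) * (c e * a e * b e)) + lam^2 * (c e * b e^2))).
      * apply sumL_ext; intros; ring.
      * rewrite !sumL_plus, !sumL_scal. ring.
Qed.

Lemma walk_app m eu ev a es1 x es2 b :
  is_walk m eu ev a es1 x -> is_walk m eu ev x es2 b -> is_walk m eu ev a (es1 ++ es2) b.
Proof. revert a. induction es1; simpl; intros a0 H1 H2; [subst; auto|].
  destruct H1 as (?&?&?). split; [|split]; eauto. Qed.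

Lemma walk_edges m eu ev a es b : is_walk m eu ev a es b -> forall e, In e es -> (e < m)%nat.
Proof. revert a. induction es; simpl; intros a0 H e0 He; [tauto|].
  destruct He as [<-|He]; [tauto|]. eapply IHes; [apply H|auto]. Qed.

Lemma walk_len_nonneg m eu ev L a es b : (forall e, (e < m)%nat -> 0 < L e) ->
  is_walk m eu ev a es b -> 0 <= walk_len L es.
Proof. intros HL Hw. change (0 <= sumL es L). apply sumL_nonneg.
  intros e He. left. apply HL. eapply walk_edges; eauto. Qed.

Lemma walk_split m eu ev a es b x : is_walk m eu ev a es b -> In x (walk_verts eu ev a es) ->
  exists es1 es2 pre, es = es1 ++ es2 /\ is_walk m eu ev a es1 x /\ is_walk m eu ev x es2 b /\
    walk_verts eu ev a es = pre ++ walk_verts eu ev x es2.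
Proof.
  revert a. induction es as [|e es IH]; intros a Hw Hx; simpl in *.
  - destruct Hx as [<-|[]]. exists [], [], []. simpl. auto.
  - destruct Hx as [<-|Hx].
    + exists [], (e :: es), []. simpl. auto.
    + destruct Hw as (He & Ha & Hw).
      destruct (IH _ Hw Hx) as (es1 & es2 & pre & -> & H1 & H2 & H3).
      exists (e :: es1), es2, (a :: pre). simpl. rewrite H3. auto.
Qed.

Lemma walk_to_path m eu ev L a es b : (forall e, (e < m)%nat -> 0 < L e) ->
  is_walk m eu ev a es b -> exists es', is_path m eu ev a es' b /\ walk_len L es' <= walk_len L es.
Proof.
  intros HL. revert a. induction es as [|e es IH]; intros a Hw.
  - exists []. split. split; auto. simpl. constructor; [simpl; tauto| constructor]. lra.
  - simpl in Hw. destruct Hw as (He & Ha & Hw).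
    destruct (IH _ Hw) as (es' & [Hw' Hnd] & Hlen).
    change (walk_len L (e :: es)) with (L e + walk_len L es).
    assert (0 < L e) by auto.
    destruct (in_dec Nat.eq_dec a (walk_verts eu ev (other eu ev e a) es')) as [Hin|Hin].
    + destruct (walk_split _ _ _ _ _ _ _ Hw' Hin) as (es1 & es2 & pre & -> & H1 & H2 & H3).
      exists es2. split. split; auto. rewrite H3 in Hnd. eapply NoDup_app_remove_l; eauto.
      unfold walk_len in *. change (sumL es2 L <= L e + sumL es L).
      change (sumL (es1 ++ es2) L <= sumL es L) in Hlen. rewrite sumL_app in Hlen.
      assert (0 <= sumL es1 L) by (apply (walk_len_nonneg m eu ev L _ es1 a HL H1)). lra.
    + exists (e :: es'). split. split. simpl; auto. simpl. constructor; auto.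
      change (walk_len L (e :: es')) with (L e + walk_len L es'). lra.
Qed.

Lemma walks_ge_L0 m eu ev L s0 s1 P0 es : (forall e, (e < m)%nat -> 0 < L e) ->
  unique_shortest_path m eu ev L s0 s1 P0 ->
  is_walk m eu ev s0 es s1 -> walk_len L P0 <= walk_len L es.
Proof. intros HL [HP HU] Hw. destruct (walk_to_path _ _ _ _ _ _ _ HL Hw) as (es' & Hp & Hle).
  destruct (list_eq_dec Nat.eq_dec es' P0) as [->|Hne]. lra.
  specialize (HU es' Hp Hne). lra. Qed.

Definition Ewalk m eu ev L s1 w (r : R) : Prop :=
  exists es, is_walk m eu ev w es s1 /\ r = - walk_len L es.

Definition dfun m eu ev L s1 (w : nat) : R :=
  - epsilon (inhabits 0) (fun M => is_lub (Ewalk m eu ev L s1 w) M).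

Lemma dfun_lub n m eu ev L s1 w : (forall e, (e < m)%nat -> 0 < L e) ->
  connected n m eu ev -> (s1 < n)%nat -> (w < n)%nat ->
  is_lub (Ewalk m eu ev L s1 w) (- dfun m eu ev L s1 w).
Proof. intros HL Hc H1 Hw. unfold dfun. rewrite Ropp_involutive.
  apply epsilon_spec.
  destruct (completeness (Ewalk m eu ev L s1 w)) as [M HM].
  - exists 0. intros r (es & Hes & ->). pose proof (walk_len_nonneg _ _ _ _ _ _ _ HL Hes). lra.
  - destruct (Hc w s1 Hw H1) as [es Hes]. exists (- walk_len L es). exists es; auto.
  - exists M; auto.
Qed.

Lemma dist_fun n m eu ev L s0 s1 P0 :
  simple_graph n m eu ev -> connected n m eu ev -> (s0 < n)%nat -> (s1 < n)%nat ->
  (forall e, (e < m)%nat -> 0 < L e) -> unique_shortest_path m eu ev L s0 s1 P0 ->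
  exists f : nat -> R, walk_len L P0 <= f s0 - f s1 /\
    forall e, (e < m)%nat -> Rabs (f (eu e) - f (ev e)) <= L e.
Proof.
  intros Hs Hc H0 H1 HL HP. exists (dfun m eu ev L s1). split.
  - pose proof (dfun_lub n m eu ev L s1 s0 HL Hc H1 H0) as [_ Hl0].
    pose proof (dfun_lub n m eu ev L s1 s1 HL Hc H1 H1) as [Hu1 _].
    assert (- dfun m eu ev L s1 s0 <= - walk_len L P0).
    { apply Hl0. intros r (es & Hes & ->). pose proof (walks_ge_L0 _ _ _ _ _ _ _ es HL HP Hes). lra. }
    assert (0 <= - dfun m eu ev L s1 s1). { apply Hu1. exists []. split. reflexivity. simpl. lra. }
    lra.
  - intros e He. destruct Hs as [Hs _]. destruct (Hs e He) as (Hu & Hv & Huv).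
    pose proof (dfun_lub n m eu ev L s1 (eu e) HL Hc H1 Hu) as [HUu HLu].
    pose proof (dfun_lub n m eu ev L s1 (ev e) HL Hc H1 Hv) as [HUv HLv].
    assert (- dfun m eu ev L s1 (ev e) <= - dfun m eu ev L s1 (eu e) + L e).
    { assert (Hb : is_upper_bound (Ewalk m eu ev L s1 (ev e)) (- dfun m eu ev L s1 (eu e) + L e)).
      { intros r (es & Hes & ->). assert (- walk_len L (e :: es) <= - dfun m eu ev L s1 (eu e)).
        { apply HUu. exists (e :: es). split; auto. simpl. split; auto. split; auto.
          unfold other. rewrite Nat.eqb_refl. auto. }
        change (walk_len L (e :: es)) with (L e + walk_len L es) in H. lra. }
      apply HLv in Hb. lra. }
    assert (- dfun m eu ev L s1 (eu e) <= - dfun m eu ev L s1 (ev e) + L e).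
    { assert (Hb : is_upper_bound (Ewalk m eu ev L s1 (eu e)) (- dfun m eu ev L s1 (ev e) + L e)).
      { intros r (es & Hes & ->). assert (- walk_len L (e :: es) <= - dfun m eu ev L s1 (ev e)).
        { apply HUv. exists (e :: es). split; auto. simpl. split; auto. split; auto.
          unfold other. destruct (Nat.eqb_spec (eu e) (ev e)); [congruence|]. auto. }
        change (walk_len L (e :: es)) with (L e + walk_len L es) in *. lra. }
      apply HLu in Hb. lra. }
    apply Rabs_le. lra.
Qed.

Definition Kirch n m eu ev L D p s0 s1 t :=
  (forall v, (v < n)%nat -> netF m eu ev (current eu ev L D p t) v = supply s0 s1 v) /\
  p t s1 = 0 /\ (forall e, (e < m)%nat -> 0 < D t e).

Definition Ssum m eu ev L D p t := sumL (seq 0 m) (fun e => L e * Rabs (current eu ev L D p t e)).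
Definition Vsum m L (D : R -> nat -> R) t := sumL (seq 0 m) (fun e => L e * D t e).

Lemma S_ge n m eu ev L D p s0 s1 t (f : nat -> R) L0 :
  simple_graph n m eu ev -> (s0 < n)%nat -> (s1 < n)%nat -> s0 <> s1 ->
  Kirch n m eu ev L D p s0 s1 t ->
  L0 <= f s0 - f s1 -> (forall e, (e < m)%nat -> Rabs (f (eu e) - f (ev e)) <= L e) ->
  L0 <= Ssum m eu ev L D p t.
Proof.
  intros Hs H0 H1 H01 (HK & _ & _) Hf Hl.
  rewrite <- (sum_by_parts n m eu ev s0 s1 _ f Hs H0 H1 H01 HK) in Hf.
  eapply Rle_trans. apply Hf. eapply Rle_trans. apply Rle_abs. eapply Rle_trans. apply sumL_abs.
  apply sumL_le. intros e He. apply in_seq in He. rewrite Rabs_mult.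
  specialize (Hl e ltac:(lia)). pose proof (Rabs_pos (current eu ev L D p t e)). nra.
Qed.

Lemma V_nonneg m L D t : (forall e, (e < m)%nat -> 0 < L e) -> (forall e, (e < m)%nat -> 0 < D t e) ->
  0 <= Vsum m L D t.
Proof. intros HL HD. apply sumL_nonneg. intros e He; apply in_seq in He.
  specialize (HL e ltac:(lia)); specialize (HD e ltac:(lia)). nra. Qed.

Lemma CS_SV n m eu ev L D p s0 s1 t :
  simple_graph n m eu ev -> (s0 < n)%nat -> (s1 < n)%nat -> s0 <> s1 ->
  (forall e, (e < m)%nat -> 0 < L e) ->
  Kirch n m eu ev L D p s0 s1 t ->
  (Ssum m eu ev L D p t)^2 <= p t s0 * Vsum m L D t.
Proof.
  intros Hs H0 H1 H01 HL (HK & Hp & HD).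
  pose proof (cauchy_schwarz (seq 0 m) (fun e => L e / D t e)
     (fun e => Rabs (current eu ev L D p t e)) (fun e => D t e)) as C.
  rewrite <- (energy_id n m eu ev L D p t s0 s1 Hs H0 H1 H01 HL HD HK Hp).
  unfold Ssum, Vsum.
  replace (sumL (seq 0 m) (fun e => L e * Rabs (current eu ev L D p t e))) with
    (sumL (seq 0 m) (fun e => L e / D t e * Rabs (current eu ev L D p t e) * D t e)).
  replace (sumL (seq 0 m) (fun e => L e * D t e)) with
    (sumL (seq 0 m) (fun e => L e / D t e * (D t e)^2)).
  replace (sumL (seq 0 m) (fun e => L e / D t e * (current eu ev L D p t e)^2)) with
    (sumL (seq 0 m) (fun e => L e / D t e * (Rabs (current eu ev L D p t e))^2)).
  - apply C. intros e He; apply in_seq in He.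
    specialize (HL e ltac:(lia)); specialize (HD e ltac:(lia)).
    apply Rmult_le_pos; [lra|left; apply Rinv_0_lt_compat; lra].
  - apply sumL_ext; intros. rewrite <- Rsqr_pow2, <- Rsqr_abs, Rsqr_pow2. reflexivity.
  - apply sumL_ext; intros e He; apply in_seq in He. specialize (HD e ltac:(lia)). field; lra.
  - apply sumL_ext; intros e He; apply in_seq in He. specialize (HD e ltac:(lia)). field; lra.
Qed.

Lemma rayleigh n m eu ev L D p s0 s1 t1 t2 lam :
  simple_graph n m eu ev -> (s0 < n)%nat -> (s1 < n)%nat -> s0 <> s1 ->
  (forall e, (e < m)%nat -> 0 < L e) ->
  Kirch n m eu ev L D p s0 s1 t1 -> Kirch n m eu ev L D p s0 s1 t2 -> 0 < lam ->
  (forall e, (e < m)%nat -> lam * D t1 e <= D t2 e) ->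
  p t2 s0 <= p t1 s0 / lam.
Proof.
  intros Hs H0 H1 H01 HL (HK1 & Hp1 & HD1) (HK2 & Hp2 & HD2) Hlam Hle.
  set (Q1 := current eu ev L D p t1). set (Q2 := current eu ev L D p t2).
  assert (E1 := energy_id n m eu ev L D p t1 s0 s1 Hs H0 H1 H01 HL HD1 HK1 Hp1).
  assert (E2 := energy_id n m eu ev L D p t2 s0 s1 Hs H0 H1 H01 HL HD2 HK2 Hp2).
  assert (B := sum_by_parts n m eu ev s0 s1 Q1 (p t2) Hs H0 H1 H01 HK1).
  rewrite Hp2, Rminus_0_r in B.
  pose proof (cauchy_schwarz (seq 0 m) (fun e => L e / D t2 e) Q1 Q2) as C. cbv beta in C.
  assert (Hc2 : forall e, In e (seq 0 m) -> 0 <= L e / D t2 e).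
  { intros e He; apply in_seq in He. specialize (HD2 e ltac:(lia)); specialize (HL e ltac:(lia)).
    apply Rmult_le_pos; [lra|left; apply Rinv_0_lt_compat; lra]. }
  specialize (C Hc2).
  replace (sumL (seq 0 m) (fun e => L e / D t2 e * Q1 e * Q2 e)) with (p t2 s0) in C.
  2:{ rewrite <- B. apply sumL_ext; intros e He; apply in_seq in He.
      specialize (HD2 e ltac:(lia)); specialize (HL e ltac:(lia)). unfold Q2, current. field; lra. }
  fold Q2 in E2. rewrite E2 in C.
  assert (Hnn : 0 <= p t2 s0).
  { rewrite <- E2. apply sumL_nonneg. intros e He; apply in_seq in He.
    specialize (HD2 e ltac:(lia)); specialize (HL e ltac:(lia)).
    apply Rmult_le_pos; [apply Rmult_le_pos; [lra|left; apply Rinv_0_lt_compat; lra]|apply pow2_ge_0]. }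
  assert (Hmono : sumL (seq 0 m) (fun e => L e / D t2 e * Q1 e ^ 2) <= p t1 s0 / lam).
  { fold Q1 in E1. apply Rle_trans with (sumL (seq 0 m) (fun e => / lam * (L e / D t1 e * Q1 e ^ 2))).
    2:{ rewrite sumL_scal, E1. right; unfold Rdiv; ring. }
    apply sumL_le. intros e He; apply in_seq in He.
    specialize (HD2 e ltac:(lia)); specialize (HD1 e ltac:(lia)); specialize (HL e ltac:(lia)).
    specialize (Hle e ltac:(lia)). fold Q1.
    assert (L e / D t2 e <= / lam * (L e / D t1 e)).
    { unfold Rdiv. rewrite <- Rmult_assoc, (Rmult_comm (/lam)), Rmult_assoc, <- Rinv_mult.
      apply Rmult_le_compat_l; [lra|]. apply Rinv_le_contravar; nra. }
    pose proof (pow2_ge_0 (Q1 e)). nra. }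
  destruct (Req_dec (p t2 s0) 0) as [Z|Z].
  - rewrite Z. assert (0 <= p t1 s0 / lam).
    { unfold Rdiv. apply Rmult_le_pos; [|left; apply Rinv_0_lt_compat; lra].
      rewrite <- E1. apply sumL_nonneg. intros e He; apply in_seq in He.
      specialize (HD1 e ltac:(lia)); specialize (HL e ltac:(lia)).
      apply Rmult_le_pos; [apply Rmult_le_pos; [lra|left; apply Rinv_0_lt_compat; lra]|apply pow2_ge_0]. }
    lra.
  - assert (p t2 s0 <= sumL (seq 0 m) (fun e => L e / D t2 e * Q1 e ^ 2)).
    { apply Rmult_le_reg_r with (p t2 s0). lra. assert (p t2 s0 ^2 = p t2 s0 * p t2 s0) by ring. lra. }
    lra.
Qed.

Lemma dpl_plus f g x a b : derivable_pt_lim f x a -> derivable_pt_lim g x b ->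
  derivable_pt_lim (fun t => f t + g t) x (a + b).
Proof. intros; exact (derivable_pt_lim_plus f g x a b H H0). Qed.
Lemma dpl_minus f g x a b : derivable_pt_lim f x a -> derivable_pt_lim g x b ->
  derivable_pt_lim (fun t => f t - g t) x (a - b).
Proof. intros; exact (derivable_pt_lim_minus f g x a b H H0). Qed.
Lemma dpl_mult f g x a b : derivable_pt_lim f x a -> derivable_pt_lim g x b ->
  derivable_pt_lim (fun t => f t * g t) x (a * g x + f x * b).
Proof. intros; exact (derivable_pt_lim_mult f g x a b H H0). Qed.
Lemma dpl_const c x : derivable_pt_lim (fun _ => c) x 0.
Proof. exact (derivable_pt_lim_const c x). Qed.
Lemma dpl_id x : derivable_pt_lim (fun t => t) x 1.
Proof. exact (derivable_pt_lim_id x). Qed.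
Lemma dpl_exp x : derivable_pt_lim (fun t => exp t) x (exp x).
Proof. exact (derivable_pt_lim_exp x). Qed.
Lemma dpl_ln f x a : derivable_pt_lim f x a -> 0 < f x ->
  derivable_pt_lim (fun t => ln (f t)) x (a / f x).
Proof. intros H Hp. unfold Rdiv. rewrite Rmult_comm.
  exact (derivable_pt_lim_comp f ln x a (/ f x) H (derivable_pt_lim_ln _ Hp)). Qed.
Lemma dpl_scal c f x a : derivable_pt_lim f x a -> derivable_pt_lim (fun t => c * f t) x (c * a).
Proof. intros. replace (c * a) with (0 * f x + c * a) by ring. apply dpl_mult; auto. apply dpl_const. Qed.
Lemma dpl_ext f g x a : (forall t, f t = g t) -> derivable_pt_lim f x a -> derivable_pt_lim g x a.
Proof. intros H Hd eps He. destruct (Hd eps He) as [d Hdd]. exists d. intros h h0 hd.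
  rewrite <- !H. apply Hdd; auto. Qed.

Lemma dpl_sum l (h : nat -> R -> R) (h' : nat -> R) x :
  (forall e, In e l -> derivable_pt_lim (h e) x (h' e)) ->
  derivable_pt_lim (fun t => sumL l (fun e => h e t)) x (sumL l h').
Proof. induction l as [|a l IH]; intros H.
  - rewrite sumL_nil. apply dpl_ext with (fun _ => 0). intros; rewrite sumL_nil; auto. apply dpl_const.
  - rewrite sumL_cons. apply dpl_ext with (fun t => h a t + sumL l (fun e => h e t)).
    intros; rewrite sumL_cons; auto. apply dpl_plus. apply H; left; auto.
    apply IH; intros; apply H; right; auto. Qed.

Lemma mono_deriv g g' a b : a <= b -> (forall c, a <= c <= b -> derivable_pt_lim g c (g' c)) ->
  (forall c, a <= c <= b -> 0 <= g' c) -> g a <= g b.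
Proof. intros Hab Hd Hp. destruct (Req_dec a b) as [->|Hne]; [lra|].
  destruct (MVT_cor2 g g' a b ltac:(lra) Hd) as (c & Hc & Hc2).
  specialize (Hp c ltac:(lra)). nra. Qed.

Lemma exp_small K eps : 0 < eps -> exists T, forall t, T <= t -> K * exp (- t) < eps.
Proof. intros He. exists (Rabs K / eps + 1). intros t Ht.
  assert (0 < Rabs K / eps + 1). { assert (0 <= Rabs K / eps) by (apply Rmult_le_pos; [apply Rabs_pos| left; apply Rinv_0_lt_compat; lra]). lra. }
  assert (Et : 1 + t < exp t) by (apply exp_ineq1; lra).
  rewrite exp_Ropp. assert (0 < exp t) by apply exp_pos.
  assert (K <= Rabs K) by apply Rle_abs.
  assert (Rabs K < eps * (1 + t)).
  { assert (Rabs K / eps * eps = Rabs K) by (field; lra). nra. }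
  apply Rmult_lt_reg_r with (exp t); auto. rewrite Rmult_assoc, Rinv_l by lra. nra. Qed.

Lemma exp_le x y : x <= y -> exp x <= exp y.
Proof. intros H. destruct (Req_dec x y) as [->|Hn]; [lra|]. left; apply exp_increasing; lra. Qed.
Lemma ln_le' x y : 0 < x -> x <= y -> ln x <= ln y.
Proof. intros H1 H. destruct (Req_dec x y) as [->|Hn]; [lra|]. left; apply ln_increasing; lra. Qed.

Definition Setup n m eu ev L s0 s1 D p :=
  simple_graph n m eu ev /\ connected n m eu ev /\ (s0 < n)%nat /\ (s1 < n)%nat /\ s0 <> s1 /\
  (forall e, (e < m)%nat -> 0 < L e) /\ potentials_ok n m eu ev L D p s0 s1 /\
  physarum_traj m eu ev L D p.

Lemma D_ratio n m eu ev L s0 s1 D p e t1 t2 : Setup n m eu ev L s0 s1 D p -> (e < m)%nat ->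
  0 < t1 <= t2 -> D t1 e * exp t1 <= D t2 e * exp t2.
Proof.
  intros (_&_&_&_&_&_&_&HT) He Ht. destruct (HT e He) as (_ & _ & Hd).
  apply (mono_deriv (fun t => D t e * exp t)
     (fun t => (Rabs (current eu ev L D p t e) - D t e) * exp t + D t e * exp t)); try lra.
  - intros c Hc. apply dpl_mult. apply Hd; lra. apply dpl_exp.
  - intros c Hc. pose proof (exp_pos c). pose proof (Rabs_pos (current eu ev L D p c e)). nra.
Qed.

Lemma D_pos n m eu ev L s0 s1 D p e t : Setup n m eu ev L s0 s1 D p -> (e < m)%nat ->
  0 <= t -> 0 < D t e.
Proof.
  intros HS He Ht. pose proof HS as (_&_&_&_&_&_&_&HT). destruct (HT e He) as (H0 & Hc & _).
  destruct (Hc (D 0 e / 2) ltac:(lra)) as (d & Hd & Hdd).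
  destruct (Rlt_le_dec t d) as [Hlt|Hge].
  - specialize (Hdd t ltac:(lra)). apply Rabs_def2 in Hdd. lra.
  - specialize (Hdd (d/2) ltac:(lra)). apply Rabs_def2 in Hdd.
    pose proof (D_ratio n m eu ev L s0 s1 D p e (d/2) t HS He ltac:(lra)).
    pose proof (exp_pos (d/2)). pose proof (exp_pos t).
    assert (0 < D (d/2) e * exp (d/2)) by nra. nra.
Qed.

Lemma Kirch_all n m eu ev L s0 s1 D p t : Setup n m eu ev L s0 s1 D p -> 0 <= t ->
  Kirch n m eu ev L D p s0 s1 t.
Proof. intros HS Ht. pose proof HS as (_&_&_&_&_&_&HP&_). destruct (HP t Ht) as [Hp1 HK].
  unfold Kirch; split; [|split]; auto. intros e He; eapply D_pos; eauto. Qed.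

Lemma Q_le1 n m eu ev L s0 s1 D p t e : Setup n m eu ev L s0 s1 D p -> 0 <= t -> (e < m)%nat ->
  Rabs (current eu ev L D p t e) <= 1.
Proof. intros HS Ht He. pose proof HS as (Hs&_&H0&H1&H01&HL&_&_).
  destruct (Kirch_all _ _ _ _ _ _ _ _ _ t HS Ht) as (HK & _ & HD).
  apply (cut_bound n m eu ev L D p t s0 s1 e Hs H0 H1 H01 HL); auto. intros; apply Rlt_le; auto. Qed.

Lemma D_upper n m eu ev L s0 s1 D p e t : Setup n m eu ev L s0 s1 D p -> (e < m)%nat ->
  1 <= t -> D t e <= Rmax 1 (D 1 e).
Proof.
  intros HS He Ht. pose proof HS as (_&_&_&_&_&_&_&HT). destruct (HT e He) as (_ & _ & Hd).
  assert (M : - ((D 1 e - 1) * exp 1) <= - ((D t e - 1) * exp t)).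
  { apply (mono_deriv (fun t => - ((D t e - 1) * exp t))
     (fun t => - ((Rabs (current eu ev L D p t e) - D t e - 0) * exp t + (D t e - 1) * exp t))); try lra.
    - intros c Hc. apply dpl_ext with (fun t => 0 - ((D t e - 1) * exp t)). intros; ring.
      replace (- ((Rabs (current eu ev L D p c e) - D c e - 0) * exp c + (D c e - 1) * exp c))
        with (0 - ((Rabs (current eu ev L D p c e) - D c e - 0) * exp c + (D c e - 1) * exp c)) by ring.
      apply (dpl_minus (fun _ => 0)). apply dpl_const.
      apply (dpl_mult (fun t => D t e - 1) (fun t => exp t)).
      apply (dpl_minus (fun t => D t e) (fun _ => 1)). apply Hd; lra. apply dpl_const.
      apply dpl_exp.
    - intros c Hc. pose proof (exp_pos c). pose proof (Q_le1 _ _ _ _ _ _ _ _ p c e HS ltac:(lra) He). nra. }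
  assert (E : exp 1 <= exp t) by (apply exp_le; lra). pose proof (exp_pos 1).
  unfold Rmax. destruct (Rle_dec 1 (D 1 e)); nra.
Qed.

Lemma sumL_minus l f g : sumL l (fun e => f e - g e) = sumL l f - sumL l g.
Proof. transitivity (sumL l (fun e => f e + (-1) * g e)). apply sumL_ext; intros; ring.
  rewrite sumL_plus, sumL_scal. ring. Qed.

Definition Gf m L (D : R -> nat -> R) (P0 : list nat) t :=
  sumL P0 (fun e => L e * ln (D t e)) - Vsum m L D t.
Definition Gd m eu ev L D p P0 t :=
  sumL P0 (fun e => L e * ((Rabs (current eu ev L D p t e) - D t e) / D t e))
  - sumL (seq 0 m) (fun e => L e * (Rabs (current eu ev L D p t e) - D t e)).

Lemma V_deriv n m eu ev L s0 s1 D p t : Setup n m eu ev L s0 s1 D p -> 0 < t ->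
  derivable_pt_lim (fun t => Vsum m L D t) t
     (sumL (seq 0 m) (fun e => L e * (Rabs (current eu ev L D p t e) - D t e))).
Proof. intros HS Ht. pose proof HS as (_&_&_&_&_&_&_&HT). unfold Vsum.
  apply (dpl_sum (seq 0 m) (fun e t => L e * D t e)). intros e He; apply in_seq in He.
  apply dpl_scal. destruct (HT e ltac:(lia)) as (_&_&Hd). apply Hd; auto. Qed.

Lemma Vd_eq m eu ev L D p t : 
  sumL (seq 0 m) (fun e => L e * (Rabs (current eu ev L D p t e) - D t e)) =
  Ssum m eu ev L D p t - Vsum m L D t.
Proof. unfold Ssum, Vsum. rewrite <- sumL_minus. apply sumL_ext; intros; ring. Qed.

Lemma G_deriv n m eu ev L s0 s1 D p P0 t : Setup n m eu ev L s0 s1 D p ->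
  (forall e, In e P0 -> (e < m)%nat) -> 0 < t ->
  derivable_pt_lim (Gf m L D P0) t (Gd m eu ev L D p P0 t).
Proof. intros HS HP Ht. pose proof HS as (_&_&_&_&_&_&_&HT). unfold Gf, Gd.
  apply (dpl_minus (fun t => sumL P0 (fun e => L e * ln (D t e))) (fun t => Vsum m L D t)).
  - apply (dpl_sum P0 (fun e t => L e * ln (D t e))). intros e He.
    apply dpl_scal. destruct (HT e (HP e He)) as (_&_&Hd). apply dpl_ln. apply Hd; auto.
    eapply D_pos; eauto; lra.
  - eapply V_deriv; eauto.
Qed.

Lemma Gd_bound n m eu ev L s0 s1 D p P0 t (f : nat -> R) : Setup n m eu ev L s0 s1 D p ->
  is_walk m eu ev s0 P0 s1 ->
  walk_len L P0 <= f s0 - f s1 -> (forall e, (e < m)%nat -> Rabs (f (eu e) - f (ev e)) <= L e) ->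
  0 <= t ->
  (p t s0 + Vsum m L D t) / 2 - walk_len L P0 <= Gd m eu ev L D p P0 t /\
  0 <= (p t s0 + Vsum m L D t) / 2 - walk_len L P0 /\
  Ssum m eu ev L D p t - walk_len L P0 <= Gd m eu ev L D p P0 t /\
  walk_len L P0 <= Ssum m eu ev L D p t /\
  (Ssum m eu ev L D p t)^2 <= p t s0 * Vsum m L D t.
Proof.
  intros HS HW Hf1 Hf2 Ht. pose proof HS as (Hs&_&H0&H1&H01&HL&_&_).
  pose proof (Kirch_all _ _ _ _ _ _ _ _ _ t HS Ht) as HK.
  pose proof HK as (HK1 & Hp1 & HD).
  pose proof (S_ge n m eu ev L D p s0 s1 t f _ Hs H0 H1 H01 HK Hf1 Hf2) as HSg.
  pose proof (CS_SV n m eu ev L D p s0 s1 t Hs H0 H1 H01 HL HK) as HCS.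
  pose proof (walk_edges _ _ _ _ _ _ HW) as HPe.
  assert (HA : p t s0 <= sumL P0 (fun e => L e * Rabs (current eu ev L D p t e) / D t e)).
  { pose proof (walk_abs_le m eu ev (p t) s0 P0 s1 HW) as W. rewrite Hp1, Rminus_0_r in W.
    eapply Rle_trans. apply Rle_abs. eapply Rle_trans. apply W. right. apply sumL_ext.
    intros e He. specialize (HPe e He). specialize (HD e HPe). specialize (HL e HPe).
    unfold current. rewrite Rabs_mult. rewrite (Rabs_right (D t e / L e)).
    field; lra. apply Rle_ge, Rmult_le_pos; [lra|left; apply Rinv_0_lt_compat; lra]. }
  assert (HGd : Gd m eu ev L D p P0 t = sumL P0 (fun e => L e * Rabs (current eu ev L D p t e) / D t e)
     - walk_len L P0 - (Ssum m eu ev L D p t - Vsum m L D t)).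
  { unfold Gd. rewrite (Vd_eq m eu ev L D p t). f_equal. change (walk_len L P0) with (sumL P0 L).
    rewrite <- sumL_minus. apply sumL_ext. intros e He. specialize (HD e (HPe e He)). field; lra. }
  assert (HV := V_nonneg m L D t HL HD).
  assert (HSn : 0 <= Ssum m eu ev L D p t).
  { apply sumL_nonneg; intros e He; apply in_seq in He. specialize (HL e ltac:(lia)).
    pose proof (Rabs_pos (current eu ev L D p t e)). nra. }
  assert (Hpn : 0 <= p t s0).
  { rewrite <- (energy_id n m eu ev L D p t s0 s1 Hs H0 H1 H01 HL HD HK1 Hp1).
    apply sumL_nonneg. intros e He; apply in_seq in He.
    specialize (HD e ltac:(lia)); specialize (HL e ltac:(lia)).
    apply Rmult_le_pos; [apply Rmult_le_pos; [lra|left; apply Rinv_0_lt_compat; lra]|apply pow2_ge_0]. }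
  assert (HAM : Ssum m eu ev L D p t <= (p t s0 + Vsum m L D t)/2).
  { assert (0 <= (p t s0 - Vsum m L D t)^2) by apply pow2_ge_0. nra. }
  rewrite HGd. repeat split; lra.
Qed.

Definition Hyps n m eu ev L s0 s1 D p P0 (f : nat -> R) :=
  Setup n m eu ev L s0 s1 D p /\ is_walk m eu ev s0 P0 s1 /\
  walk_len L P0 <= f s0 - f s1 /\ (forall e, (e < m)%nat -> Rabs (f (eu e) - f (ev e)) <= L e).

Lemma Gd_b n m eu ev L s0 s1 D p P0 f t : Hyps n m eu ev L s0 s1 D p P0 f -> 0 <= t ->
  (p t s0 + Vsum m L D t) / 2 - walk_len L P0 <= Gd m eu ev L D p P0 t /\
  0 <= (p t s0 + Vsum m L D t) / 2 - walk_len L P0 /\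
  Ssum m eu ev L D p t - walk_len L P0 <= Gd m eu ev L D p P0 t /\
  walk_len L P0 <= Ssum m eu ev L D p t /\
  (Ssum m eu ev L D p t)^2 <= p t s0 * Vsum m L D t.
Proof. intros (HS & HW & H1 & H2) Ht. eapply Gd_bound; eauto. Qed.

Lemma G_der n m eu ev L s0 s1 D p P0 f t : Hyps n m eu ev L s0 s1 D p P0 f -> 0 < t ->
  derivable_pt_lim (Gf m L D P0) t (Gd m eu ev L D p P0 t).
Proof. intros (HS & HW & _ & _) Ht. eapply G_deriv; eauto. eapply walk_edges; eauto. Qed.

Lemma G_mono n m eu ev L s0 s1 D p P0 f a b : Hyps n m eu ev L s0 s1 D p P0 f ->
  0 < a <= b -> Gf m L D P0 a <= Gf m L D P0 b.
Proof. intros H Hab. apply (mono_deriv _ (Gd m eu ev L D p P0)). lra.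
  intros c Hc; eapply G_der; eauto; lra.
  intros c Hc. destruct (Gd_b _ _ _ _ _ _ _ _ _ _ _ c H ltac:(lra)) as (A & B & _). lra. Qed.

Definition Cb m (D : R -> nat -> R) := 1 + sumL (seq 0 m) (fun e => D 1 e).

Lemma D_le_Cb n m eu ev L s0 s1 D p e t : Setup n m eu ev L s0 s1 D p -> (e < m)%nat -> 1 <= t ->
  D t e <= Cb m D.
Proof. intros HS He Ht. eapply Rle_trans. eapply D_upper; eauto. unfold Cb.
  assert (D 1 e <= sumL (seq 0 m) (fun e => D 1 e)).
  { apply (sumL_ge_term (seq 0 m) (fun e => D 1 e)). apply in_seq; lia.
    intros e' He'; apply in_seq in He'. apply Rlt_le; apply (D_pos n m eu ev L s0 s1 D p); auto; first [lia | lra]. }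
  assert (0 <= sumL (seq 0 m) (fun e => D 1 e)).
  { apply sumL_nonneg. intros e' He'; apply in_seq in He'. apply Rlt_le; apply (D_pos n m eu ev L s0 s1 D p); auto; first [lia | lra]. }
  unfold Rmax; destruct (Rle_dec 1 (D 1 e)); lra. Qed.

Lemma G_upper n m eu ev L s0 s1 D p P0 f t : Hyps n m eu ev L s0 s1 D p P0 f -> 1 <= t ->
  Gf m L D P0 t <= sumL P0 (fun e => L e * ln (Cb m D)).
Proof. intros (HS & HW & _ & _) Ht. pose proof HS as (_&_&_&_&_&HL&_&_). unfold Gf.
  assert (HV := V_nonneg m L D t HL (fun e He => D_pos _ _ _ _ _ _ _ _ _ e t HS He ltac:(lra))).
  assert (sumL P0 (fun e => L e * ln (D t e)) <= sumL P0 (fun e => L e * ln (Cb m D))).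
  { apply sumL_le. intros e He. assert (Hem := walk_edges _ _ _ _ _ _ HW e He).
    apply Rmult_le_compat_l. left; auto. apply ln_le'. apply (D_pos n m eu ev L s0 s1 D p); auto; first [lia | lra].
    eapply D_le_Cb; eauto. }
  lra. Qed.

Lemma G_sup n m eu ev L s0 s1 D p P0 f : Hyps n m eu ev L s0 s1 D p P0 f ->
  exists Gs, (forall t, 1 <= t -> Gf m L D P0 t <= Gs) /\
    forall eps, 0 < eps -> exists T, 1 <= T /\ forall t, T <= t -> Gs - Gf m L D P0 t < eps.
Proof. intros H.
  destruct (completeness (fun r => exists t, 1 <= t /\ r = Gf m L D P0 t)) as [Gs [HU HL]].
  - exists (sumL P0 (fun e => L e * ln (Cb m D))). intros r (t & Ht & ->). eapply G_upper; eauto.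
  - exists (Gf m L D P0 1). exists 1. split; auto; lra.
  - exists Gs. split. intros t Ht. apply HU. exists t; auto.
    intros eps He. destruct (Rlt_le_dec (Gs - eps) (Gs - eps)) as [|_]; [lra|].
    assert (exists t, 1 <= t /\ Gs - eps < Gf m L D P0 t).
    { apply Classical_Prop.NNPP. intros Hn. assert (Gs <= Gs - eps); [|lra].
      apply HL. intros r (t & Ht & ->). apply Rnot_lt_le. intros Hc. apply Hn. exists t; auto. }
    destruct H0 as (T & HT & HG). exists T. split; auto. intros t Ht.
    pose proof (G_mono _ _ _ _ _ _ _ _ _ _ _ T t H ltac:(lra)). lra.
Qed.

Lemma D_lower n m eu ev L s0 s1 D p P0 f e : Hyps n m eu ev L s0 s1 D p P0 f -> In e P0 ->
  exists c, 0 < c /\ forall t, 1 <= t -> c <= D t e.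
Proof. intros H He. pose proof H as (HS & HW & _ & _). pose proof HS as (_&_&_&_&_&HL&_&_).
  assert (Hem := walk_edges _ _ _ _ _ _ HW e He).
  set (K := Gf m L D P0 1 - sumL P0 (fun e => L e * ln (Cb m D))).
  exists (exp (ln (Cb m D) + K / L e)). split. apply exp_pos. intros t Ht.
  assert (G1 := G_mono _ _ _ _ _ _ _ _ _ _ _ 1 t H ltac:(lra)). unfold Gf at 2 in G1.
  assert (HV := V_nonneg m L D t HL (fun e He => D_pos _ _ _ _ _ _ _ _ _ e t HS He ltac:(lra))).
  assert (Hs : K <= sumL P0 (fun e => L e * ln (D t e) - L e * ln (Cb m D))).
  { rewrite sumL_minus. unfold K. lra. }
  assert (Ht1 : - (L e * ln (D t e) - L e * ln (Cb m D)) <=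
     sumL P0 (fun e => - (L e * ln (D t e) - L e * ln (Cb m D)))).
  { apply (sumL_ge_term P0 (fun e => - (L e * ln (D t e) - L e * ln (Cb m D)))); auto.
    intros e' He'. assert (Hem' := walk_edges _ _ _ _ _ _ HW e' He').
    assert (ln (D t e') <= ln (Cb m D)). { apply ln_le'. apply (D_pos n m eu ev L s0 s1 D p); auto; first [lia | lra]. eapply D_le_Cb; eauto. }
    specialize (HL e' Hem'). nra. }
  replace (sumL P0 (fun e => - (L e * ln (D t e) - L e * ln (Cb m D)))) with
    (-1 * sumL P0 (fun e => L e * ln (D t e) - L e * ln (Cb m D))) in Ht1
    by (rewrite <- sumL_scal; apply sumL_ext; intros; ring).
  assert (HLe := HL e Hem).
  assert (ln (Cb m D) + K / L e <= ln (D t e)).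
  { assert (K <= L e * (ln (D t e) - ln (Cb m D))) by nra.
    assert (K / L e <= ln (D t e) - ln (Cb m D)).
    { apply (Rmult_le_reg_r (L e)); auto. unfold Rdiv. rewrite Rmult_assoc, Rinv_l by lra. lra. }
    lra. }
  rewrite <- (exp_ln (D t e)) by (apply (D_pos n m eu ev L s0 s1 D p); auto; first [lia | lra]). apply exp_le; auto.
Qed.

Lemma exp_neg_mul t : exp t * exp (- t) = 1.
Proof. rewrite <- exp_plus. replace (t + - t) with 0 by ring. apply exp_0. Qed.

Lemma V_lower n m eu ev L s0 s1 D p P0 f : Hyps n m eu ev L s0 s1 D p P0 f ->
  forall eps, 0 < eps -> exists T, forall t, T <= t -> walk_len L P0 - eps < Vsum m L D t.
Proof.
  intros H eps He. pose proof H as (HS & _ & _ & _). set (L0 := walk_len L P0).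
  destruct (exp_small (Rabs (Vsum m L D 1 - L0) * exp 1) eps He) as [T HT].
  exists (Rmax T 1). intros t Ht. assert (T <= t) by (eapply Rle_trans; [apply Rmax_l|eauto]).
  assert (1 <= t) by (eapply Rle_trans; [apply Rmax_r|eauto]).
  assert (M : (Vsum m L D 1 - L0) * exp 1 <= (Vsum m L D t - L0) * exp t).
  { apply (mono_deriv (fun t => (Vsum m L D t - L0) * exp t)
     (fun t => (sumL (seq 0 m) (fun e => L e * (Rabs (current eu ev L D p t e) - D t e)) - 0) * exp t
        + (Vsum m L D t - L0) * exp t)); auto.
    - intros c Hc. apply (dpl_mult (fun t => Vsum m L D t - L0) (fun t => exp t)).
      apply (dpl_minus (fun t => Vsum m L D t) (fun _ => L0)). eapply V_deriv; eauto; lra.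
      apply dpl_const. apply dpl_exp.
    - intros c Hc. rewrite Vd_eq. destruct (Gd_b _ _ _ _ _ _ _ _ _ _ _ c H ltac:(lra)) as (_&_&_&A&_).
      pose proof (exp_pos c). fold L0 in A. nra. }
  specialize (HT t H0). pose proof (exp_pos t). pose proof (exp_pos (-t)).
  pose proof (exp_neg_mul t). pose proof (Rle_abs (- (Vsum m L D 1 - L0))).
  rewrite Rabs_Ropp in H5. pose proof (exp_pos 1).
  assert ((Vsum m L D 1 - L0) * exp 1 * exp (-t) <= (Vsum m L D t - L0)).
  { replace (Vsum m L D t - L0) with ((Vsum m L D t - L0) * exp t * exp (- t)).
    apply Rmult_le_compat_r; lra. rewrite Rmult_assoc, H4. ring. }
  assert (- (Rabs (Vsum m L D 1 - L0) * exp 1 * exp (-t)) <= (Vsum m L D 1 - L0) * exp 1 * exp (-t)).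
  { assert (0 < exp 1 * exp (-t)) by (apply Rmult_lt_0_compat; lra).
    rewrite !Rmult_assoc. nra. }
  lra.
Qed.

Lemma V_upper n m eu ev L s0 s1 D p P0 f : Hyps n m eu ev L s0 s1 D p P0 f ->
  forall eps, 0 < eps -> exists T, forall t, T <= t -> Vsum m L D t < walk_len L P0 + eps.
Proof.
  intros H eps He. pose proof H as (HS & _ & _ & _). pose proof HS as (_&_&_&_&_&HL&_&_).
  set (L0 := walk_len L P0).
  destruct (G_sup _ _ _ _ _ _ _ _ _ _ _ H) as (Gs & HGs & HGc).
  destruct (HGc (eps/2) ltac:(lra)) as (T & HT1 & HT).
  set (VB := sumL (seq 0 m) (fun e => L e * Cb m D)).
  destruct (exp_small (VB * exp T) (eps/2) ltac:(lra)) as [T' HT'].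
  exists (Rmax T T'). intros t Ht. assert (T <= t) by (eapply Rle_trans; [apply Rmax_l|eauto]).
  assert (T' <= t) by (eapply Rle_trans; [apply Rmax_r|eauto]).
  set (c := Gf m L D P0 T - L0).
  assert (M : - ((Vsum m L D T - Gf m L D P0 T + c) * exp T) <=
              - ((Vsum m L D t - Gf m L D P0 t + c) * exp t)).
  { apply (mono_deriv (fun t => - ((Vsum m L D t - Gf m L D P0 t + c) * exp t))
     (fun t => 0 - (((sumL (seq 0 m) (fun e => L e * (Rabs (current eu ev L D p t e) - D t e))
         - Gd m eu ev L D p P0 t) + 0) * exp t + (Vsum m L D t - Gf m L D P0 t + c) * exp t))); auto.
    - intros x Hx. apply dpl_ext with (fun t => 0 - ((Vsum m L D t - Gf m L D P0 t + c) * exp t)).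
      intros; ring. apply (dpl_minus (fun _ => 0)). apply dpl_const.
      apply (dpl_mult (fun t => Vsum m L D t - Gf m L D P0 t + c) (fun t => exp t)).
      apply (dpl_plus (fun t => Vsum m L D t - Gf m L D P0 t) (fun _ => c)).
      apply (dpl_minus (fun t => Vsum m L D t)). eapply V_deriv; eauto; lra.
      eapply G_der; eauto; lra. apply dpl_const. apply dpl_exp.
    - intros x Hx. rewrite Vd_eq. destruct (Gd_b _ _ _ _ _ _ _ _ _ _ _ x H ltac:(lra)) as (_&_&A&_&_).
      pose proof (G_mono _ _ _ _ _ _ _ _ _ _ _ T x H ltac:(lra)).
      pose proof (exp_pos x). fold L0 in A. unfold c. nra. }
  assert (HVT : Vsum m L D T <= VB).
  { apply sumL_le. intros e He'; apply in_seq in He'. apply Rmult_le_compat_l.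
    left; apply HL; lia. eapply D_le_Cb; eauto; lia. }
  assert (HV0 := V_nonneg m L D T HL (fun e He => D_pos _ _ _ _ _ _ _ _ _ e T HS He ltac:(lra))).
  specialize (HT' t H1). specialize (HT T ltac:(lra)). pose proof (HGs t ltac:(lra)).
  pose proof (exp_pos t). pose proof (exp_pos (-t)). pose proof (exp_pos T).
  pose proof (exp_neg_mul t).
  assert (Vsum m L D t - Gf m L D P0 t + c <= (Vsum m L D T - L0) * exp T * exp (- t)).
  { replace (Vsum m L D t - Gf m L D P0 t + c) with ((Vsum m L D t - Gf m L D P0 t + c) * exp t * exp (-t))
      by (rewrite Rmult_assoc, H6; ring).
    apply Rmult_le_compat_r. lra. unfold c in *. lra. }
  unfold c in H7.
  assert ((Vsum m L D T - L0) * exp T * exp (- t) <= VB * exp T * exp (-t)).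
  { apply Rmult_le_compat_r; [lra|]. apply Rmult_le_compat_r; [lra|].
    assert (0 <= L0) by (eapply walk_len_nonneg; eauto; destruct H as (_&HW&_); eauto). lra. }
  lra.
Qed.

Lemma L0_nonneg n m eu ev L s0 s1 D p P0 f : Hyps n m eu ev L s0 s1 D p P0 f -> 0 <= walk_len L P0.
Proof. intros (HS & HW & _). pose proof HS as (_&_&_&_&_&HL&_&_). eapply walk_len_nonneg; eauto. Qed.

Lemma p_nonneg n m eu ev L s0 s1 D p s : Setup n m eu ev L s0 s1 D p -> 0 <= s -> 0 <= p s s0.
Proof. intros HS Hs0. pose proof HS as (Hs&_&H0&H1&H01&HL&_&_).
    assert (Hk := Kirch_all _ _ _ _ _ _ _ _ _ s HS Hs0). destruct Hk as (HK1 & Hp1 & HD).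
      rewrite <- (energy_id n m eu ev L D p s s0 s1 Hs H0 H1 H01 HL HD HK1 Hp1).
      apply sumL_nonneg. intros e He'; apply in_seq in He'.
      specialize (HD e ltac:(lia)); specialize (HL e ltac:(lia)).
      apply Rmult_le_pos; [apply Rmult_le_pos; [lra|left; apply Rinv_0_lt_compat; lra]|apply pow2_ge_0]. Qed.

Lemma p_lower n m eu ev L s0 s1 D p P0 f : Hyps n m eu ev L s0 s1 D p P0 f ->
  forall eps, 0 < eps -> exists T, forall t, T <= t -> walk_len L P0 - eps < p t s0.
Proof.
  intros H eps He. pose proof H as (HS & _ & _ & _). pose proof HS as (_&_&_&_&_&HL&_&_).
  destruct (V_upper _ _ _ _ _ _ _ _ _ _ _ H eps He) as [T HT]. exists (Rmax T 0). intros t Ht.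
  assert (T <= t) by (eapply Rle_trans; [apply Rmax_l|eauto]).
  assert (0 <= t) by (eapply Rle_trans; [apply Rmax_r|eauto]).
  specialize (HT t H0). destruct (Gd_b _ _ _ _ _ _ _ _ _ _ _ t H H1) as (_&_&_&A&B).
  pose proof (L0_nonneg _ _ _ _ _ _ _ _ _ _ _ H).
  assert (HV0 := V_nonneg m L D t HL (fun e He => D_pos _ _ _ _ _ _ _ _ _ e t HS He H1)).
  set (L0 := walk_len L P0) in *. set (V := Vsum m L D t) in *. set (S := Ssum m eu ev L D p t) in *.
  assert (L0 * L0 <= S * S) by (apply Rmult_le_compat; lra).
  assert (S^2 = S * S) by ring.
  assert (L0 * L0 <= p t s0 * V) by lra.
  apply Rnot_le_lt. intros Hc.
  destruct (Rle_dec 0 (p t s0)).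
  - assert (p t s0 * V <= (L0 - eps) * (L0 + eps)).
    { apply Rmult_le_compat; lra. } nra.
  - exfalso. apply n0. eapply p_nonneg; eauto.
Qed.

Lemma p_upper n m eu ev L s0 s1 D p P0 f : Hyps n m eu ev L s0 s1 D p P0 f ->
  forall eps, 0 < eps -> exists T, forall t, T <= t -> p t s0 < walk_len L P0 + eps.
Proof.
  intros H eps He. pose proof H as (HS & _ & _ & _). pose proof HS as (Hs&_&H0&H1&H01&HL&_&_).
  pose proof (L0_nonneg _ _ _ _ _ _ _ _ _ _ _ H) as HL0.
  set (L0 := walk_len L P0) in *.
  set (rho := (L0 + eps) / (L0 + eps / 2)).
  assert (Hrho : 1 < rho).
  { unfold rho. apply (Rmult_lt_reg_r (L0 + eps/2)). lra. unfold Rdiv.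
    rewrite Rmult_assoc, Rinv_l by lra. lra. }
  set (dl := ln rho).
  assert (Hdl : 0 < dl). { unfold dl. rewrite <- ln_1. apply ln_increasing; lra. }
  assert (Edl : exp dl = rho) by (apply exp_ln; lra).
  destruct (V_lower _ _ _ _ _ _ _ _ _ _ _ H (eps/4) ltac:(lra)) as [T1 HT1].
  destruct (G_sup _ _ _ _ _ _ _ _ _ _ _ H) as (Gs & HGs & HGc).
  destruct (HGc (dl * eps / 8) ltac:(nra)) as (T2 & HT2a & HT2).
  exists (Rmax T1 T2 + dl). intros t Ht.
  assert (T1 <= t - dl) by (pose proof (Rmax_l T1 T2); lra).
  assert (T2 <= t - dl) by (pose proof (Rmax_r T1 T2); lra).
  apply Rnot_le_lt. intros Hc.
  assert (Hps : forall s, t - dl <= s <= t -> L0 + eps / 2 <= p s s0).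
  { intros s Hs'.
    assert (Hr := rayleigh n m eu ev L D p s0 s1 s t (exp (s - t)) Hs H0 H1 H01 HL
       (Kirch_all _ _ _ _ _ _ _ _ _ s HS ltac:(lra)) (Kirch_all _ _ _ _ _ _ _ _ _ t HS ltac:(lra))
       (exp_pos _)).
    assert (Hr' : p t s0 <= p s s0 / exp (s - t)).
    { apply Hr. intros e He'.
      pose proof (D_ratio n m eu ev L s0 s1 D p e s t HS He' ltac:(lra)).
      unfold Rminus. rewrite exp_plus, exp_Ropp.
      pose proof (exp_pos t). pose proof (exp_pos s).
      apply (Rmult_le_reg_r (exp t)); auto.
      replace (exp s * / exp t * D s e * exp t) with (D s e * exp s) by (field; lra). lra. }
    unfold Rdiv in Hr'. rewrite <- exp_Ropp in Hr'. replace (- (s - t)) with (t - s) in Hr' by ring.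
    assert (exp (t - s) <= rho) by (rewrite <- Edl; apply exp_le; lra).
    assert (0 <= p s s0).
    { assert (Hk := Kirch_all _ _ _ _ _ _ _ _ _ s HS ltac:(lra)). destruct Hk as (HK1 & Hp1 & HD).
      rewrite <- (energy_id n m eu ev L D p s s0 s1 Hs H0 H1 H01 HL HD HK1 Hp1).
      apply sumL_nonneg. intros e He'; apply in_seq in He'.
      specialize (HD e ltac:(lia)); specialize (HL e ltac:(lia)).
      apply Rmult_le_pos; [apply Rmult_le_pos; [lra|left; apply Rinv_0_lt_compat; lra]|apply pow2_ge_0]. }
    assert (L0 + eps <= p s s0 * rho) by nra.
    apply (Rmult_le_reg_r ((L0 + eps) / (L0 + eps / 2))).
    fold rho. lra.
    replace ((L0 + eps / 2) * ((L0 + eps) / (L0 + eps / 2))) with (L0 + eps) by (field; lra). fold rho. lra. }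
  assert (M : Gf m L D P0 (t - dl) - eps / 8 * (t - dl) <= Gf m L D P0 t - eps / 8 * t).
  { apply (mono_deriv (fun s => Gf m L D P0 s - eps / 8 * s)
      (fun s => Gd m eu ev L D p P0 s - eps / 8 * 1)). lra.
    - intros c Hc2. apply (dpl_minus (Gf m L D P0) (fun s => eps / 8 * s)).
      eapply G_der; eauto; lra. apply dpl_scal, dpl_id.
    - intros c Hc2. destruct (Gd_b _ _ _ _ _ _ _ _ _ _ _ c H ltac:(lra)) as (A&_).
      specialize (HT1 c ltac:(lra)). specialize (Hps c Hc2). unfold L0 in *. lra. }
  specialize (HT2 (t - dl) ltac:(lra)). specialize (HGs t ltac:(lra)). nra.
Qed.

Lemma edge_bound n m eu ev L s0 s1 D p P0 f e : Hyps n m eu ev L s0 s1 D p P0 f -> In e P0 ->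
  forall eta, 0 < eta -> exists T, forall t, T <= t ->
    Rabs (p t (eu e) - p t (ev e)) <= L e + eta.
Proof.
  intros H He eta Heta. pose proof H as (HS & HW & _ & _). pose proof HS as (Hs&_&H0&H1&H01&HL&_&_).
  assert (Hem := walk_edges _ _ _ _ _ _ HW e He). assert (HLe := HL e Hem).
  destruct (D_lower _ _ _ _ _ _ _ _ _ _ _ e H He) as (c & Hc & HcD).
  set (beta := L e * c * (eta / L e)^2).
  assert (Hb : 0 < beta).
  { unfold beta. apply Rmult_lt_0_compat. nra. apply pow_lt. unfold Rdiv. apply Rmult_lt_0_compat; auto.
    apply Rinv_0_lt_compat; auto. }
  destruct (p_upper _ _ _ _ _ _ _ _ _ _ _ H (beta/2) ltac:(lra)) as [T1 HT1].
  destruct (V_upper _ _ _ _ _ _ _ _ _ _ _ H (beta/2) ltac:(lra)) as [T2 HT2].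
  exists (Rmax (Rmax T1 T2) 1). intros t Ht.
  pose proof (Rmax_l (Rmax T1 T2) 1). pose proof (Rmax_r (Rmax T1 T2) 1).
  pose proof (Rmax_l T1 T2). pose proof (Rmax_r T1 T2).
  specialize (HT1 t ltac:(lra)). specialize (HT2 t ltac:(lra)). specialize (HcD t ltac:(lra)).
  pose proof (Kirch_all _ _ _ _ _ _ _ _ _ t HS ltac:(lra)) as HK. destruct HK as (HK1 & Hp1 & HD).
  destruct (Gd_b _ _ _ _ _ _ _ _ _ _ _ t H ltac:(lra)) as (_&_&_&A&_).
  set (Q := current eu ev L D p t) in *.
  assert (Id : sumL (seq 0 m) (fun e => L e * D t e * (Rabs (Q e) / D t e - 1)^2) =
     p t s0 - 2 * Ssum m eu ev L D p t + Vsum m L D t).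
  { rewrite <- (energy_id n m eu ev L D p t s0 s1 Hs H0 H1 H01 HL HD HK1 Hp1).
    unfold Ssum, Vsum. fold Q. rewrite <- sumL_scal, <- sumL_minus, <- sumL_plus.
    apply sumL_ext. intros e' He'; apply in_seq in He'. specialize (HD e' ltac:(lia)).
    replace ((Q e')^2) with ((Rabs (Q e'))^2) by (rewrite <- !Rsqr_pow2, <- Rsqr_abs; auto).
    field. lra. }
  assert (Hterm : L e * D t e * (Rabs (Q e) / D t e - 1)^2 <=
     sumL (seq 0 m) (fun e => L e * D t e * (Rabs (Q e) / D t e - 1)^2)).
  { apply (sumL_ge_term (seq 0 m) (fun e => L e * D t e * (Rabs (Q e) / D t e - 1)^2)).
    apply in_seq; lia. intros e' He'; apply in_seq in He'. specialize (HD e' ltac:(lia)).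
    specialize (HL e' ltac:(lia)). apply Rmult_le_pos. nra. apply pow2_ge_0. }
  rewrite Id in Hterm. set (q := Rabs (Q e) / D t e) in *.
  assert (Hq : L e * c * (q - 1)^2 < beta).
  { assert (L e * c * (q-1)^2 <= L e * D t e * (q-1)^2).
    { apply Rmult_le_compat_r. apply pow2_ge_0. apply Rmult_le_compat_l; lra. }
    lra. }
  assert (Hq2 : q - 1 <= eta / L e).
  { destruct (Rle_dec (q - 1) 0). assert (0 < eta / L e) by (unfold Rdiv; apply Rmult_lt_0_compat; auto; apply Rinv_0_lt_compat; auto). lra.
    unfold beta in Hq. assert ((q-1)^2 < (eta / L e)^2).
    { apply (Rmult_lt_reg_l (L e * c)). nra. lra. }
    assert (0 < eta / L e) by (unfold Rdiv; apply Rmult_lt_0_compat; auto; apply Rinv_0_lt_compat; auto).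
    nra. }
  assert (HD0 := HD e Hem).
  assert (Ed : Rabs (p t (eu e) - p t (ev e)) = L e * q).
  { unfold q, Q, current. rewrite Rabs_mult, (Rabs_right (D t e / L e)).
    field; lra. apply Rle_ge, Rmult_le_pos; [lra|left; apply Rinv_0_lt_compat; lra]. }
  rewrite Ed. assert (L e * (q - 1) <= L e * (eta / L e)) by (apply Rmult_le_compat_l; lra).
  replace (L e * (eta / L e)) with eta in H6 by (field; lra). nra.
Qed.

Lemma ev_list (P : nat -> R -> Prop) l :
  (forall e, In e l -> exists T, forall t, T <= t -> P e t) ->
  exists T, forall t, T <= t -> forall e, In e l -> P e t.
Proof. induction l as [|a l IH]; intros H.
  - exists 0. intros t _ e [].
  - destruct (H a (or_introl eq_refl)) as [Ta HTa].
    destruct IH as [Tl HTl]. intros; apply H; right; auto.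
    exists (Rmax Ta Tl). intros t Ht e [<-|He].
    + apply HTa. eapply Rle_trans; [apply Rmax_l|eauto].
    + apply HTl; auto. eapply Rle_trans; [apply Rmax_r|eauto]. Qed.

Lemma sumL_const_plus l (g : nat -> R) c : sumL l (fun e => g e + c) = sumL l g + c * INR (length l).
Proof. induction l as [|a l IH]. rewrite !sumL_nil; simpl; ring.
  rewrite !sumL_cons, IH. simpl length. rewrite S_INR. ring. Qed.

Theorem mainTheorem8
  (n m : nat) (eu ev : nat -> nat) (L : nat -> R) (s0 s1 : nat)
  (Hsimple : simple_graph n m eu ev)
  (Hconn : connected n m eu ev)
  (Hs0 : (s0 < n)%nat) (Hs1 : (s1 < n)%nat) (Hs01 : s0 <> s1)
  (HL : forall e, (e < m)%nat -> 0 < L e)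
  (P0 : list nat) (HP0 : unique_shortest_path m eu ev L s0 s1 P0)
  (D : R -> nat -> R) (p : R -> nat -> R)
  (Hpot : potentials_ok n m eu ev L D p s0 s1)
  (Htraj : physarum_traj m eu ev L D p) :
  forall v d, In v (walk_verts eu ev s0 P0) -> is_dist m eu ev L v s1 d ->
    forall eps, 0 < eps -> exists T, forall t, T <= t -> Rabs (p t v - d) < eps.
Proof.
  intros v d Hv Hd eps Heps.
  destruct (dist_fun n m eu ev L s0 s1 P0 Hsimple Hconn Hs0 Hs1 HL HP0) as (f & Hf1 & Hf2).
  assert (HW : is_walk m eu ev s0 P0 s1) by (destruct HP0 as [[HW _] _]; exact HW).
  assert (H : Hyps n m eu ev L s0 s1 D p P0 f).
  { unfold Hyps, Setup. tauto. }
  destruct (walk_split m eu ev s0 P0 s1 v HW Hv) as (es1 & es2 & pre & HPe & H1 & H2 & _).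
  assert (Hlen : walk_len L P0 = walk_len L es1 + walk_len L es2).
  { rewrite HPe. apply sumL_app. }
  assert (Hdd : d = walk_len L es2).
  { destruct Hd as [(w & Hw & Hwl) Hmin]. specialize (Hmin es2 H2).
    pose proof (walks_ge_L0 m eu ev L s0 s1 P0 (es1 ++ w) HL HP0 (walk_app _ _ _ _ _ _ _ _ H1 Hw)).
    unfold walk_len in H0 at 2. change (walk_len L P0 <= sumL (es1 ++ w) L) in H0.
    rewrite sumL_app in H0. change (sumL w L) with (walk_len L w) in H0.
    change (sumL es1 L) with (walk_len L es1) in H0. lra. }
  set (N := INR (length P0)).
  assert (HN : 0 <= N) by apply pos_INR.
  set (eta := eps / (2 * (N + 1))).
  assert (Heta : 0 < eta) by (unfold eta; apply Rdiv_lt_0_compat; lra).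
  assert (HetaN : eta * N < eps / 2).
  { unfold eta. apply (Rmult_lt_reg_r (2 * (N+1))). lra.
    replace (eps / (2 * (N + 1)) * N * (2 * (N + 1))) with (eps * N) by (field; lra). nra. }
  destruct (ev_list (fun e t => Rabs (p t (eu e) - p t (ev e)) <= L e + eta) P0) as [TA HTA].
  { intros e He. eapply edge_bound; eauto. }
  destruct (p_upper _ _ _ _ _ _ _ _ _ _ _ H (eps/2) ltac:(lra)) as [TB HTB].
  destruct (p_lower _ _ _ _ _ _ _ _ _ _ _ H (eps/2) ltac:(lra)) as [TC HTC].
  exists (Rmax (Rmax TA TB) (Rmax TC 0)). intros t Ht.
  pose proof (Rmax_l (Rmax TA TB) (Rmax TC 0)). pose proof (Rmax_r (Rmax TA TB) (Rmax TC 0)).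
  pose proof (Rmax_l TA TB). pose proof (Rmax_r TA TB). pose proof (Rmax_l TC 0). pose proof (Rmax_r TC 0).
  specialize (HTA t ltac:(lra)). specialize (HTB t ltac:(lra)). specialize (HTC t ltac:(lra)).
  destruct (Hpot t ltac:(lra)) as [Hp1 _].
  assert (U1 : Rabs (p t v - p t s1) <= walk_len L es2 + eta * INR (length es2)).
  { eapply Rle_trans. apply (walk_abs_le m eu ev (p t) v es2 s1 H2).
    change (walk_len L es2) with (sumL es2 L). rewrite <- sumL_const_plus.
    apply sumL_le. intros e He. apply HTA. rewrite HPe. apply in_or_app; right; auto. }
  assert (U2 : Rabs (p t s0 - p t v) <= walk_len L es1 + eta * INR (length es1)).
  { eapply Rle_trans. apply (walk_abs_le m eu ev (p t) s0 es1 v H1).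
    change (walk_len L es1) with (sumL es1 L). rewrite <- sumL_const_plus.
    apply sumL_le. intros e He. apply HTA. rewrite HPe. apply in_or_app; left; auto. }
  assert (HNs : INR (length es1) + INR (length es2) = N).
  { unfold N. rewrite HPe, length_app, plus_INR. auto. }
  pose proof (pos_INR (length es1)). pose proof (pos_INR (length es2)).
  rewrite Hp1, Rminus_0_r in U1. rewrite Hdd.
  pose proof (Rle_abs (p t v)). pose proof (Rle_abs (p t s0 - p t v)).
  assert (eta * INR (length es1) <= eta * N) by (apply Rmult_le_compat_l; lra).
  assert (eta * INR (length es2) <= eta * N) by (apply Rmult_le_compat_l; lra).
  apply Rabs_def1; lra.
Qed.
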